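(* Let $P$ be a join-semilattice with a least element $0$, and let $L:=\mathrm{Id}(P)$ be the lattice of ideals of $P$ ordered by inclusion. Suppose that $\dim_\vee(P)=n<\omega$. Then $L$ is order-scattered if and only if $P$ is order-scattered and $P$ has no join-subsemilattice isomorphic to $\Omega(\eta)$.
   Context: An ideal of a poset $P$ is a non-empty initial segment of $P$ that is up-directed. A poset is order-scattered if it contains no subset order-isomorphic to the chain $\mathbb{Q}$ of rationals. The join-dimension $\dim_\vee(P)$ of a join-semilattice $P$ is the least cardinal $\kappa$ such that $P$ admits a one-to-one join-preserving map into a direct product of $\kappa$ chains (with the componentwise order). $\Omega(\eta)$ denotes the join-subsemilattice of the direct product $\mathbb{N}\times D$ (componentwise order), where $\mathbb{N}$ is the chain of non-negative integers and $D$ is the chain of dyadic rationals in $[0,1)$, consisting of the pairs $(n,r)$ with $2^n r\in\mathbb{Z}$; its second projection is all of $D$ and each set $(\{n\}\times D)\cap\Omega(\eta)$ is finite. *)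

(* Defs.v *)
From mathcomp Require Import all_boot all_order all_algebra.
Set Implicit Arguments. Unset Strict Implicit. Unset Printing Implicit Defensive.
Import Order.TTheory GRing.Theory Num.Theory.

Section Defs.

Definition is_partial_order (T : Type) (le : T -> T -> Prop) : Prop :=
  (forall x, le x x) /\
  (forall x y, le x y -> le y x -> x = y) /\
  (forall x y z, le x y -> le y z -> le x z).

Definition is_total_order (T : Type) (le : T -> T -> Prop) : Prop :=
  is_partial_order le /\ (forall x y, le x y \/ le y x).

Definition is_lub (T : Type) (le : T -> T -> Prop) (x y z : T) : Prop :=
  le x z /\ le y z /\ (forall w, le x w -> le y w -> le z w).

Definition is_join_semilattice (T : Type) (le : T -> T -> Prop)
  (join : T -> T -> T) : Prop :=
  is_partial_order le /\ (forall x y, is_lub le x y (join x y)).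

Definition is_ideal (T : Type) (le : T -> T -> Prop) (I : T -> Prop) : Prop :=
  (exists x, I x) /\
  (forall x y, le x y -> I y -> I x) /\
  (forall x y, I x -> I y -> exists z, I z /\ le x z /\ le y z).

Definition set_incl (T : Type) (A B : T -> Prop) : Prop := forall x, A x -> B x.

Definition order_scattered_on (T : Type) (A : T -> Prop) (le : T -> T -> Prop)
  : Prop :=
  ~ exists f : rat -> T,
      (forall q, A (f q)) /\ (forall p q, (p <= q)%R <-> le (f p) (f q)).

Definition order_scattered (T : Type) (le : T -> T -> Prop) : Prop :=
  order_scattered_on (fun _ => True) le.

Definition join_embeds_in_chains (T : Type) (le : T -> T -> Prop)
  (join : T -> T -> T) (n : nat) : Prop :=
  exists (C : nat -> Type) (leC : forall i, C i -> C i -> Prop)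
         (f : T -> forall i, C i),
    (forall i, i < n -> is_total_order (leC i)) /\
    (forall x y, (forall i, i < n -> f x i = f y i) -> x = y) /\
    (forall x y i, i < n -> is_lub (leC i) (f x i) (f y i) (f (join x y) i)).

Definition join_dim (T : Type) (le : T -> T -> Prop) (join : T -> T -> T)
  (n : nat) : Prop :=
  join_embeds_in_chains le join n /\
  (forall m, m < n -> ~ join_embeds_in_chains le join m).

(* elements (n, r) of N x D with r dyadic in [0,1) and 2^n r an integer *)
Definition Omega_elt (x : nat * rat) : Prop :=
  (0 <= x.2)%R /\ (x.2 < 1)%R /\ exists z : int, (x.2 * 2%:R ^+ x.1 = z%:~R)%R.

Definition Omega_join (x y : nat * rat) : nat * rat :=
  (maxn x.1 y.1, Num.max x.2 y.2).

Definition has_Omega_subsemilattice (T : Type) (join : T -> T -> T) : Prop :=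
  exists g : nat * rat -> T,
    (forall x y, Omega_elt x -> Omega_elt y -> g x = g y -> x = y) /\
    (forall x y, Omega_elt x -> Omega_elt y ->
       g (Omega_join x y) = join (g x) (g y)).

End Defs.

(* Main.v *)
Require Import Defs.
From mathcomp Require Import all_boot all_order all_algebra.
From mathcomp Require Import ring lra.
From Stdlib Require Import Classical IndefiniteDescription.
Set Implicit Arguments. Unset Strict Implicit. Unset Printing Implicit Defensive.
Import Order.TTheory GRing.Theory Num.Theory.
Section Rats.
Local Open Scope ring_scope.
Definition dy (r : rat) := exists m : nat, exists z : int, r * 2%:R ^+ m = z%:~R.

Lemma dy0 : dy 0. Proof. by exists 0%N, 0; rewrite mul0r. Qed.
Lemma dy1 : dy 1. Proof. by exists 0%N, 1; rewrite mul1r expr0. Qed.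
Lemma dyD x y : dy x -> dy y -> dy (x + y).
Proof.
move=> [m [z Hz]] [m' [z' Hz']]; exists (m + m')%N, (z * 2 ^+ m' + z' * 2 ^+ m).
rewrite intrD !intrM -Hz -Hz' !rmorphXn /= exprD.
ring.
Qed.
Lemma dyH x : dy x -> dy (x / 2%:R).
Proof.
move=> [m [z Hz]]; exists m.+1, z; rewrite exprS -Hz.
by field.
Qed.

Definition ent := (rat * (rat * rat))%type.
Definition lo_of (s : seq ent) (x : rat) : rat :=
  foldr (fun e acc => if e.1 < x then Num.max e.2.2 acc else acc) 0 s.
Definition hi_of (s : seq ent) (x : rat) : rat :=
  foldr (fun e acc => if x < e.1 then Num.min e.2.1 acc else acc) 1 s.
Definition place (s : seq ent) (x : rat) : ent :=
  (x, ((lo_of s x + lo_of s x + lo_of s x + hi_of s x) / 4%:R,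
       (lo_of s x + hi_of s x) / 2%:R)).

Fixpoint build (N : nat) : seq ent :=
  match N with
  | 0 => [::]
  | N'.+1 => let s := build N' in
     match (unpickle N' : option rat) with
     | Some x => if x \in map fst s then s else rcons s (place s x)
     | None => s
     end
  end.

Lemma lo_ge s x e : e \in s -> e.1 < x -> e.2.2 <= lo_of s x.
Proof.
elim: s => //= e' s IH; rewrite inE => /orP [/eqP -> -> | Hin Hx].
  by rewrite le_max lexx.
case: ifP => _; last exact: IH.
by rewrite le_max (IH Hin Hx) orbT.
Qed.
Lemma lo_ge0 s x : 0 <= lo_of s x.
Proof. elim: s => //= e s IH; case: ifP => // _; by rewrite le_max IH orbT. Qed.
Lemma lo_cases s x : lo_of s x = 0 \/ exists2 e, e \in s & e.1 < x /\ lo_of s x = e.2.2.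
Proof.
elim: s => [|e s IH] /=; first by left.
case: ifP => Hx; last first.
  case: IH => [->|[e' He' H]]; [by left | by right; exists e'; rewrite ?inE ?He' ?orbT].
rewrite /Num.max; case: ifP => _.
  case: IH => [->|[e' He' H]]; [by left | by right; exists e'; rewrite ?inE ?He' ?orbT].
by right; exists e; rewrite ?inE ?eqxx.
Qed.
Lemma hi_le s x e : e \in s -> x < e.1 -> hi_of s x <= e.2.1.
Proof.
elim: s => //= e' s IH; rewrite inE => /orP [/eqP -> -> | Hin Hx].
  by rewrite ge_min lexx.
case: ifP => _; last exact: IH.
by rewrite ge_min (IH Hin Hx) orbT.
Qed.
Lemma hi_le1 s x : hi_of s x <= 1.
Proof. elim: s => //= e s IH; case: ifP => // _; by rewrite ge_min IH orbT. Qed.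
Lemma hi_cases s x : hi_of s x = 1 \/ exists2 e, e \in s & x < e.1 /\ hi_of s x = e.2.1.
Proof.
elim: s => [|e s IH] /=; first by left.
case: ifP => Hx; last first.
  case: IH => [->|[e' He' H]]; [by left | by right; exists e'; rewrite ?inE ?He' ?orbT].
rewrite /Num.min; case: ifP => _.
  by right; exists e; rewrite ?inE ?eqxx.
case: IH => [->|[e' He' H]]; [by left | by right; exists e'; rewrite ?inE ?He' ?orbT].
Qed.

Definition good (s : seq ent) :=
  (forall e, e \in s -> [/\ 0 < e.2.1, e.2.1 < e.2.2, e.2.2 < 1, dy e.2.1 & dy e.2.2]) /\
  (forall e e', e \in s -> e' \in s -> e.1 < e'.1 -> e.2.2 < e'.2.1).

Lemma good_place s x : good s -> good (rcons s (place s x)).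
Proof.
move=> [H1 H2].
have Hlh : lo_of s x < hi_of s x.
  case: (lo_cases s x) => [->|[e He [Hex ->]]];
  case: (hi_cases s x) => [->|[e' He' [Hxe' ->]]].
  - by [].
  - by case: (H1 e' He').
  - by case: (H1 e He).
  - apply: H2 => //; exact: lt_trans Hex Hxe'.
have Hdl : dy (lo_of s x).
  case: (lo_cases s x) => [->|[e He [_ ->]]]; [exact: dy0|by case: (H1 e He)].
have Hdh : dy (hi_of s x).
  case: (hi_cases s x) => [->|[e He [_ ->]]]; [exact: dy1|by case: (H1 e He)].
have H0 := lo_ge0 s x; have H1' := hi_le1 s x.
have Hnew : [/\ 0 < (place s x).2.1, (place s x).2.1 < (place s x).2.2,
   (place s x).2.2 < 1, dy (place s x).2.1 & dy (place s x).2.2].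
  rewrite /=; split.
  - lra.
  - lra.
  - lra.
  - have -> : 4%:R = 2%:R * 2%:R :> rat by rewrite -natrM.
    rewrite invfM mulrA; apply: dyH; apply: dyH; do 3! apply: dyD => //.
  - by apply: dyH; apply: dyD.
split.
  by move=> e; rewrite mem_rcons inE => /orP [/eqP ->|]; [|exact: H1].
move=> e e'; rewrite !mem_rcons !inE => /orP [/eqP ->|He] /orP [/eqP ->|He'] /=.
- by rewrite ltxx.
- move=> Hx; apply: lt_le_trans (hi_le He' Hx); lra.
- move=> Hx; apply: le_lt_trans (lo_ge He Hx) _; lra.
- exact: H2.
Qed.

Lemma good_build N : good (build N).
Proof.
elim: N => [|N IH] /=; first by split.
case: (unpickle N) => // x; case: ifP => // _; exact: good_place.
Qed.

Lemma build_mono N M e : (N <= M)%N -> e \in build N -> e \in build M.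
Proof.
elim: M => [|M IH]; first by rewrite leqn0 => /eqP ->.
rewrite leq_eqVlt => /orP [/eqP -> //|]; rewrite ltnS => HNM He.
have {}He := IH HNM He; rewrite /=.
case: (unpickle M) => // x; case: ifP => // _; by rewrite mem_rcons inE He orbT.
Qed.

Lemma build_has x : exists p, (x, p) \in build (pickle x).+1.
Proof.
rewrite /= pickleK; case: ifP.
  by move=> /mapP [[y p] Hp /= Hxy]; subst; exists p.
by move=> _; exists (place (build (pickle x)) x).2; rewrite mem_rcons inE eqxx.
Qed.

Lemma forth : exists u t : rat -> rat,
  (forall x, [/\ 0 < u x, u x < t x, t x < 1, dy (u x) & dy (t x)]) /\
  (forall x y, x < y -> t x < u y).
Proof.
have Hp : forall x, {p | (x, p) \in build (pickle x).+1}.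
  move=> x; apply: sigW; exact: build_has.
exists (fun x => (sval (Hp x)).1), (fun x => (sval (Hp x)).2); split.
  move=> x; case: (Hp x) => p Hx /=.
  by case: (good_build (pickle x).+1) => H1 _; case: (H1 _ Hx).
move=> x y Hxy; case: (Hp x) => p Hx; case: (Hp y) => p' Hy /=.
set M := maxn (pickle x).+1 (pickle y).+1.
have Hx' := build_mono (leq_maxl _ _ : ((pickle x).+1 <= M)%N) Hx.
have Hy' := build_mono (leq_maxr _ _ : ((pickle y).+1 <= M)%N) Hy.
by case: (good_build M) => _ H2; apply: (H2 _ _ Hx' Hy').
Qed.


Lemma omega_up m m' r : Omega_elt (m, r) -> (m <= m')%N -> Omega_elt (m', r).
Proof.
move=> [H0 [H1 [z Hz]]] Hm; split => //; split => //=.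
exists (z * 2 ^+ (m' - m)); rewrite /= in Hz.
by rewrite intrM -Hz rmorphXn /= -mulrA -exprD subnKC.
Qed.

Lemma omega_join x y : Omega_elt x -> Omega_elt y -> Omega_elt (Omega_join x y).
Proof.
case: x => m r; case: y => m' s Hx Hy; rewrite /Omega_join /=.
have Hx' := omega_up Hx (leq_maxl m m'); have Hy' := omega_up Hy (leq_maxr m m').
by case: (leP r s) => _.
Qed.

Lemma omega_repr m r : Omega_elt (m, r) ->
  exists2 z : nat, (z < 2 ^ m)%N & r = z%:R / 2%:R ^+ m.
Proof.
move=> [/= H0 [H1 [z Hz]]].
have Hp : (0 : rat) < 2%:R ^+ m by apply: exprn_gt0.
have Hr : r = z%:~R / 2%:R ^+ m by rewrite -Hz mulfK // gt_eqF.
have Hz0 : 0 <= z.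
  by rewrite -(ler0z rat) -Hz; apply: mulr_ge0 => //; apply: ltW.
have Hz1 : z%:~R < (2 ^ m)%:R :> rat.
  by rewrite -Hz natrX; rewrite -[X in _ < X]mul1r ltr_pM2r.
case: z Hz0 Hz Hr Hz1 => // k _ Hz Hr Hz1.
exists k; last by rewrite Hr.
by rewrite -(ltr_nat rat).
Qed.

Lemma dy_omega r : (exists m : nat, exists z : int, r * 2%:R ^+ m = z%:~R) ->
  0 <= r -> r < 1 -> exists m, Omega_elt (m, r).
Proof. by move=> [m [z Hz]] H0 H1; exists m; split => //; split => //; exists z. Qed.

End Rats.

Section Refine.
Local Open Scope ring_scope.
Unset Implicit Arguments.
Variables (C : nat -> Type) (M : forall k, rat -> C k -> Prop).
Hypothesis Mmono : forall k p q, p <= q -> forall c, M k p c -> M k q c.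

Definition strictc k (a b : rat) := forall p q, a < p -> p < q -> q < b ->
  ~ (forall c, M k q c -> M k p c).
Definition constc k (a b : rat) := forall p q, a < p -> p < b -> a < q -> q < b ->
  (forall c, M k q c -> M k p c).
Set Implicit Arguments.

Lemma refine N : exists a b, a < b /\ forall k, (k < N)%N -> strictc k a b \/ constc k a b.
Proof.
elim: N => [|N [a [b [Hab H]]]]; first by exists 0, 1; split.
case: (classic (strictc N a b)) => HN.
  exists a, b; split => // k; rewrite ltnS leq_eqVlt => /orP [/eqP ->|Hk]; first by left.
  exact: H.
have [p [q [Hap [Hpq [Hqb Hincl]]]]] : exists p q, a < p /\ p < q /\ q < b /\
   (forall c, M N q c -> M N p c).
  apply: NNPP => Hn; apply: HN => p q Hap Hpq Hqb Hi; apply: Hn.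
  by exists p, q.
exists p, q; split => // k; rewrite ltnS leq_eqVlt => /orP [/eqP ->|Hk].
  right => x y Hpx Hxq Hpy Hyq c Hc.
  apply: (Mmono _ _ _ (ltW Hpx)); apply: Hincl; apply: (Mmono _ _ _ (ltW Hyq)) Hc.
case: (H k Hk) => Hs; [left|right].
- move=> x y Hpx Hxy Hyq; apply: Hs => //; [exact: lt_trans Hap Hpx|exact: lt_trans Hyq Hqb].
- move=> x y Hpx Hxq Hpy Hyq; apply: Hs;
   by [exact: lt_trans Hap _|exact: lt_trans _ Hqb].
Qed.
End Refine.

Section Basic.
Variables (P : Type) (le : P -> P -> Prop) (join : P -> P -> P).
Hypothesis HP : is_join_semilattice le join.

Lemma ple_refl x : le x x. Proof. by case: HP => [[H _] _]. Qed.
Lemma ple_trans x y z : le x y -> le y z -> le x z.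
Proof. by case: HP => [[_ [_ H]] _]; apply: H. Qed.
Lemma ple_anti x y : le x y -> le y x -> x = y.
Proof. by case: HP => [[_ [H _]] _]; apply: H. Qed.
Lemma join_l x y : le x (join x y). Proof. by case: HP => _ H; case: (H x y). Qed.
Lemma join_r x y : le y (join x y). Proof. by case: HP => _ H; case: (H x y) => _ []. Qed.
Lemma join_min x y w : le x w -> le y w -> le (join x y) w.
Proof. by case: HP => _ H; case: (H x y) => _ [] _; apply. Qed.

Lemma ideal_join I x y : is_ideal le I -> I x -> I y -> I (join x y).
Proof.
move=> [_ [Hd Hu]] Hx Hy; case: (Hu x y Hx Hy) => z [Hz [Hxz Hyz]].
exact: (Hd _ _ (join_min Hxz Hyz) Hz).
Qed.

Lemma ideal_fin I (Q : nat -> P -> Prop) N : is_ideal le I ->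
  (forall k x y, le x y -> Q k x -> Q k y) ->
  (forall k, (k < N)%N -> exists y, I y /\ Q k y) ->
  exists y, I y /\ forall k, (k < N)%N -> Q k y.
Proof.
move=> HI Hup; elim: N => [|N IH] H.
  by case: HI => [[y Hy] _]; exists y; split.
case: IH => [k Hk|y [Hy HQ]]; first by apply: H; apply: ltnW.
case: (H N (ltnSn N)) => y' [Hy' HQ'].
case: HI => _ [_ Hu]; case: (Hu y y' Hy Hy') => z [Hz [Hyz Hy'z]].
exists z; split => // k; rewrite ltnS leq_eqVlt => /orP [/eqP ->|Hk].
  exact: Hup Hy'z HQ'.
exact: Hup Hyz (HQ k Hk).
Qed.

Unset Implicit Arguments.
Variables (C : nat -> Type) (leC : forall i, C i -> C i -> Prop) (f : P -> forall i, C i) (n : nat).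
Set Implicit Arguments.
Hypothesis Htot : forall i, (i < n)%N -> is_total_order (leC i).
Hypothesis Hinj : forall x y, (forall i, (i < n)%N -> f x i = f y i) -> x = y.
Hypothesis Hlub : forall x y i, (i < n)%N -> is_lub (leC i) (f x i) (f y i) (f (join x y) i).

Lemma leC_refl i c : (i < n)%N -> leC i c c.
Proof. by move=> Hi; case: (Htot Hi) => [[H _] _]. Qed.
Lemma leC_trans i a b c : (i < n)%N -> leC i a b -> leC i b c -> leC i a c.
Proof. by move=> Hi; case: (Htot Hi) => [[_ [_ H]] _]; apply: H. Qed.
Lemma leC_anti i a b : (i < n)%N -> leC i a b -> leC i b a -> a = b.
Proof. by move=> Hi; case: (Htot Hi) => [[_ [H _]] _]; apply: H. Qed.
Lemma leC_total i a b : (i < n)%N -> leC i a b \/ leC i b a.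
Proof. by move=> Hi; case: (Htot Hi) => _ H; apply: H. Qed.
Lemma leC_not i a b : (i < n)%N -> ~ leC i a b -> leC i b a.
Proof. by move=> Hi H; case: (leC_total a b Hi). Qed.

Lemma lub_le x y i c : (i < n)%N ->
  leC i (f (join x y) i) c <-> leC i (f x i) c /\ leC i (f y i) c.
Proof.
move=> Hi; case: (Hlub x y Hi) => H1 [H2 H3]; split.
  by move=> H; split; apply: leC_trans H.
by case; apply: H3.
Qed.
Lemma lub_ge x y i : (i < n)%N ->
  leC i (f x i) (f (join x y) i) /\ leC i (f y i) (f (join x y) i).
Proof. by move=> Hi; case: (Hlub x y Hi) => H1 [H2 H3]. Qed.

Lemma lub_eq x y i : (i < n)%N -> leC i (f y i) (f x i) -> f (join x y) i = f x i.
Proof.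
move=> Hi Hyx; apply: leC_anti => //.
  by apply/(lub_le _ _ _ Hi); split => //; apply: leC_refl.
by case: (lub_ge x y Hi).
Qed.

Lemma coord_mono x y i : le x y -> (i < n)%N -> leC i (f x i) (f y i).
Proof.
move=> Hxy Hi; have -> : y = join x y.
  by apply: ple_anti; [apply: join_r | apply: join_min => //; apply: ple_refl].
by case: (lub_ge x y Hi).
Qed.

Lemma lub_eq2 x y i : (i < n)%N -> leC i (f x i) (f y i) -> f (join x y) i = f y i.
Proof.
move=> Hi Hxy; apply: leC_anti => //.
  by apply/(lub_le _ _ _ Hi); split => //; apply: leC_refl.
by case: (lub_ge x y Hi).
Qed.

Lemma coord_le x y : (forall i, (i < n)%N -> leC i (f x i) (f y i)) -> le x y.
Proof.
move=> H; have -> : y = join x y.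
  by apply: Hinj => i Hi; rewrite lub_eq2 //; apply: H.
exact: join_l.
Qed.

Unset Implicit Arguments.
Definition cut k (I : P -> Prop) (c : C k) := exists x, I x /\ leC k c (f x k).
Set Implicit Arguments.

Lemma cut_down k I c c' : (k < n)%N -> cut k I c -> leC k c' c -> cut k I c'.
Proof. move=> Hk [x [Hx Hc]] H; exists x; split => //; exact: leC_trans H Hc. Qed.

Lemma cut_self k I x : (k < n)%N -> I x -> cut k I (f x k).
Proof. by move=> Hk Hx; exists x; split => //; apply: leC_refl. Qed.

Lemma ideal_of_cuts I x : is_ideal le I -> (forall k, (k < n)%N -> cut k I (f x k)) -> I x.
Proof.
move=> HI H.
have [y [Hy Hxy]] : exists y, I y /\ forall k, (k < n)%N -> ((k < n)%N -> leC k (f x k) (f y k)).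
  apply: ideal_fin => //.
    move=> k y y' Hyy' Hq Hk; apply: leC_trans (Hq Hk) (coord_mono Hyy' Hk) => //.
  move=> k Hk; case: (H k Hk) => y [Hy Hc]; exists y; split => //.
have Hle : le x y by apply: coord_le => i Hi; apply: Hxy.
by case: HI => _ [Hd _]; apply: Hd Hle Hy.
Qed.


Local Open Scope ring_scope.

Lemma back (bot : P) (Hbot : forall x, le bot x) :
  order_scattered le -> ~ has_Omega_subsemilattice join ->
  order_scattered_on (is_ideal le) (@set_incl P).
Proof.
move=> hS hO [F [HFI HFo]].
have HFm : forall p q : rat, p <= q -> forall x, F p x -> F q x.
  by move=> p q Hpq; apply/HFo.
pose M := fun k (q : rat) (c : C k) => cut k (F q) c.
have Mmono : forall k p q, p <= q -> forall c, M k p c -> M k q c.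
  by move=> k p q Hpq c [x [Hx Hc]]; exists x; split => //; apply: HFm Hpq x Hx.
have [a [b [Hab Href]]] := @refine C M Mmono n.
pose d := (b - a) / 3%:R.
have Hd : 0 < d by rewrite /d divr_gt0 // subr_gt0.
have Hd3 : d * 3%:R = b - a by rewrite /d mulfVK // pnatr_eq0.
pose phi := fun x : rat => a + d * (x + 1).
have phi_lt : forall x y, x < y -> phi x < phi y.
  by move=> x y Hxy; rewrite /phi ltrD2l ltr_pM2l // ltrD2r.
have phi_in : forall x, 0 <= x -> x <= 1 -> a < phi x /\ phi x < b.
  move=> x H0 H1; rewrite /phi.
  have h1 : 0 < d * (x + 1) by apply: mulr_gt0 => //; lra.
  have h2 : d * (x + 1) <= d * 2%:R by rewrite ler_pM2l //; lra.
  split; lra.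
pose q0 := phi 0.
have [u [t [Hut Hgap]]] := forth.
have Hu_in : forall r, a < phi (u r) /\ phi (u r) < b.
  move=> r; case: (Hut r) => h1 h2 h3 _ _; apply: phi_in; lra.
have Ht_in : forall r, a < phi (t r) /\ phi (t r) < b.
  move=> r; case: (Hut r) => h1 h2 h3 _ _; apply: phi_in; lra.
have Hq0_in : a < q0 /\ q0 < b by apply: phi_in; lra.
have Hq0u : forall r, q0 < phi (u r).
  by move=> r; apply: phi_lt; case: (Hut r).
have Hutl : forall r, phi (u r) < phi (t r).
  by move=> r; apply: phi_lt; case: (Hut r).
have [i [Hi Hsi]] : exists i, (i < n)%N /\ strictc C M i a b.
  apply: NNPP => Hn.
  have Hc : forall k, (k < n)%N -> constc C M k a b.
    move=> k Hk; case: (Href k Hk) => // Hs; exfalso; apply: Hn; by exists k.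
  have H01 : phi 0 < phi 1 by apply: phi_lt.
  have [h1 h2] : a < phi 1 /\ phi 1 < b by apply: phi_in; lra.
  have : phi 1 <= phi 0.
    apply/HFo => x Hx; apply: ideal_of_cuts (HFI _) _ => k Hk.
    apply: (Hc k Hk (phi 0) (phi 1)) => //; try by case: Hq0_in.
    exact: cut_self.
  by rewrite leNgt H01.
have Ha : forall r, exists y, F (phi (t r)) y /\ forall k, (k < n)%N ->
    ((k < n)%N -> strictc C M k a b -> ~ cut k (F (phi (u r))) (f y k)).
  move=> r; apply: (ideal_fin (Q := fun k y => (k < n)%N -> strictc C M k a b ->
                                   ~ cut k (F (phi (u r))) (f y k))) (HFI _) _ _.
    move=> k y y' Hyy' Hq Hk Hs Hcut; apply: (Hq Hk Hs).
    exact: cut_down Hcut (coord_mono Hyy' Hk).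
  move=> k Hk; case: (classic (strictc C M k a b)) => Hs; last first.
    by case: (HFI (phi (t r))) => [[y Hy] _]; exists y; split => // _ Hs'.
  have Hn : ~ (forall c, M k (phi (t r)) c -> M k (phi (u r)) c).
    apply: Hs; [by case: (Hu_in r)|exact: Hutl|by case: (Ht_in r)].
  have [c [Hc1 Hc2]] : exists c, M k (phi (t r)) c /\ ~ M k (phi (u r)) c.
    apply: NNPP => H; apply: Hn => c Hc; apply: NNPP => H'; apply: H; by exists c; split.
  case: Hc1 => x [Hx Hcx]; exists x; split => // _ _ Hcut; apply: Hc2.
  exact: cut_down Hcut Hcx.
pose aa := fun r => proj1_sig (constructive_indefinite_description _ (Ha r)).
have HaF : forall r, F (phi (t r)) (aa r).
  by move=> r; case: (proj2_sig (constructive_indefinite_description _ (Ha r))).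
have HaS : forall r k, (k < n)%N -> strictc C M k a b -> ~ cut k (F (phi (u r))) (f (aa r) k).
  move=> r k Hk; case: (proj2_sig (constructive_indefinite_description _ (Ha r))) => _ H.
  exact: H.
have Hainc : forall r s k, r < s -> (k < n)%N -> strictc C M k a b ->
    ~ leC k (f (aa s) k) (f (aa r) k).
  move=> r s k Hrs Hk Hs Hle; apply: (HaS s k Hk Hs).
  apply: cut_down (cut_self Hk _) Hle => //.
  apply: HFm (HaF r); apply: ltW; apply: phi_lt; exact: Hgap.
have Hainc' : forall r s k, r < s -> (k < n)%N -> strictc C M k a b ->
    leC k (f (aa r) k) (f (aa s) k).
  move=> r s k Hrs Hk Hs; apply: (leC_not Hk); exact: Hainc Hrs Hk Hs.
have Hbelow : forall y r k, F q0 y -> (k < n)%N -> strictc C M k a b ->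
    ~ leC k (f (aa r) k) (f y k).
  move=> y r k Hy Hk Hs Hle; apply: (HaS r k Hk Hs).
  apply: cut_down (cut_self Hk _) Hle => //.
  apply: HFm Hy; apply: ltW; exact: Hq0u.
have Hcst : forall r k, (k < n)%N -> constc C M k a b -> cut k (F q0) (f (aa r) k).
  move=> r k Hk Hc; apply: (Hc q0 (phi (t r))); try by case: Hq0_in.
  - by case: (Ht_in r).
  - by case: (Ht_in r).
  - exact: cut_self.
case: (classic (exists j, (j < n)%N /\ constc C M j a b /\
   ~ (exists c, cut j (F q0) c /\ forall c', cut j (F q0) c' -> leC j c' c)))
   => [[j [Hj [Hcj Hnomax]]]|Hall].
- (* Omega case *)
  have HFq0 := HFI q0.
  have Hbot0 : F q0 bot.
    by case: (HFI q0) => [[x Hx] [Hd0 _]]; exact: Hd0 _ _ (Hbot x) Hx.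
  have step : forall x m, exists y, F q0 x -> [/\ F q0 y, le x y,
      ~ leC j (f y j) (f x j) &
      forall k, (k < n)%N -> constc C M k a b -> forall z : nat, (z < 2 ^ m)%N ->
        leC k (f (aa (z%:R / 2%:R ^+ m)) k) (f y k)].
    move=> x m; case: (classic (F q0 x)) => Hx; last by exists x.
    have [y1 [Hy1 Hy1j]] : exists y1, F q0 y1 /\ ~ leC j (f y1 j) (f x j).
      apply: NNPP => H; apply: Hnomax; exists (f x j); split; first exact: cut_self.
      move=> c' [y [Hy Hc']]; apply: NNPP => Hn; apply: H; exists y; split => // Hle.
      by apply: Hn; exact: (leC_trans Hj Hc' Hle).
    have [y2 [Hy2 Hy2d]] : exists y2, F q0 y2 /\ forall z, (z < 2 ^ m)%N ->
        (forall k, (k < n)%N -> constc C M k a b ->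
           leC k (f (aa (z%:R / 2%:R ^+ m)) k) (f y2 k)).
      apply: (ideal_fin (Q := fun z y => forall k, (k < n)%N -> constc C M k a b ->
           leC k (f (aa (z%:R / 2%:R ^+ m)) k) (f y k))) (HFI q0) _ _.
        move=> z y y' Hyy' Hq k Hk Hc; exact: (leC_trans Hk (Hq k Hk Hc)) (coord_mono Hyy' Hk).
      move=> z Hz.
      have [y [Hy Hyk]] : exists y, F q0 y /\ forall k, (k < n)%N -> ((k < n)%N ->
          constc C M k a b -> leC k (f (aa (z%:R / 2%:R ^+ m)) k) (f y k)).
        apply: (ideal_fin (Q := fun k y => (k < n)%N ->
          constc C M k a b -> leC k (f (aa (z%:R / 2%:R ^+ m)) k) (f y k))) (HFI q0) _ _.
          move=> k y y' Hyy' Hq Hk Hc; exact: (leC_trans Hk (Hq Hk Hc)) (coord_mono Hyy' Hk).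
        move=> k Hk; case: (classic (constc C M k a b)) => Hc; last first.
          by case: (HFI q0) => [[y Hy] _]; exists y; split => // _ Hc'.
        case: (Hcst (z%:R / 2%:R ^+ m) k Hk Hc) => y [Hy Hle]; by exists y.
      exists y; split => // k Hk; exact: Hyk.
    exists (join x (join y1 y2)) => _; split.
    + by apply: ideal_join => //; apply: ideal_join.
    + exact: join_l.
    + move=> Hle; apply: Hy1j; apply: (leC_trans Hj _ Hle); apply: (coord_mono _ Hj).
      exact: ple_trans (join_l y1 y2) (join_r _ _).
    + move=> k Hk Hc z Hz; apply: (leC_trans Hk (Hy2d z Hz k Hk Hc)) _.
      apply: (coord_mono _ Hk); exact: ple_trans (join_r y1 y2) (join_r _ _).
  pose sf := fun x m => proj1_sig (constructive_indefinite_description _ (step x m)).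
  have Hsf : forall x m, F q0 x -> [/\ F q0 (sf x m), le x (sf x m),
      ~ leC j (f (sf x m) j) (f x j) &
      forall k, (k < n)%N -> constc C M k a b -> forall z : nat, (z < 2 ^ m)%N ->
        leC k (f (aa (z%:R / 2%:R ^+ m)) k) (f (sf x m) k)].
    by move=> x m Hx; apply: (proj2_sig (constructive_indefinite_description _ (step x m))).
  pose v := fix v (m : nat) : P := match m with 0 => sf bot 0%N | m'.+1 => sf (v m') m'.+1 end.
  have Hv : forall m, F q0 (v m) /\ (forall k, (k < n)%N -> constc C M k a b ->
      forall z : nat, (z < 2 ^ m)%N -> leC k (f (aa (z%:R / 2%:R ^+ m)) k) (f (v m) k)).
    elim => [|m [IH1 IH2]].
      by case: (Hsf bot 0%N Hbot0).
    by case: (Hsf (v m) m.+1 IH1).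
  have HvF : forall m, F q0 (v m) by move=> m; case: (Hv m).
  have Hvs : forall m, le (v m) (v m.+1) /\ ~ leC j (f (v m.+1) j) (f (v m) j).
    by move=> m; case: (Hsf (v m) m.+1 (HvF m)).
  have Hvmono : forall m m', (m <= m')%N -> le (v m) (v m').
    move=> m; elim => [|m' IH]; first by rewrite leqn0 => /eqP ->; apply: ple_refl.
    rewrite leq_eqVlt => /orP [/eqP ->|]; first by apply: ple_refl.
    rewrite ltnS => Hm; exact: ple_trans (IH Hm) (Hvs m').1.
  have Hvstrict : forall m m', (m < m')%N -> ~ leC j (f (v m') j) (f (v m) j).
    move=> m m' Hmm' Hle; apply: (Hvs m).2; apply: (leC_trans Hj _ Hle).
    exact: coord_mono (Hvmono _ _ Hmm') Hj.
  have Hdom : forall m r k, Omega_elt (m, r) -> (k < n)%N -> constc C M k a b ->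
      leC k (f (aa r) k) (f (v m) k).
    move=> m r k /omega_repr [z Hz ->] Hk Hc; exact: (Hv m).2 k Hk Hc z Hz.
  pose g := fun p : nat * rat => join (aa p.2) (v p.1).
  have HJ : forall m r s, Omega_elt (m, r) -> r < s -> le (aa r) (join (aa s) (v m)).
    move=> m r s Hom Hrs; apply: coord_le => k Hk.
    case: (Href k Hk) => Hk'.
    + apply: (leC_trans Hk (Hainc' r s k Hrs Hk Hk')) _; exact: (lub_ge (aa s) (v m) Hk).1.
    + apply: (leC_trans Hk (Hdom m r k Hom Hk Hk')) _; exact: (lub_ge (aa s) (v m) Hk).2.
  apply: hO; exists g; split.
  + move=> [m r] [m' s] Hx Hy Heq.
    have Hi1 : forall m r, f (g (m, r)) i = f (aa r) i.
      move=> m0 r0; rewrite /g /=; apply: (lub_eq Hi); apply: (leC_not Hi).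
      exact: Hbelow (HvF m0) Hi Hsi.
    have Hj1 : forall m r, Omega_elt (m, r) -> f (g (m, r)) j = f (v m) j.
      move=> m0 r0 H0; apply: (lub_eq2 Hj); exact: Hdom H0 Hj Hcj.
    have Er : r = s.
      have E := congr1 (fun x => f x i) Heq; rewrite /= !Hi1 in E.
      case: (ltgtP r s) => // Hrs; exfalso.
      * by apply: (Hainc r s i Hrs Hi Hsi); rewrite E; apply: leC_refl.
      * by apply: (Hainc s r i Hrs Hi Hsi); rewrite E; apply: leC_refl.
    have Em : m = m'.
      have E := congr1 (fun x => f x j) Heq; rewrite /= (Hj1 _ _ Hx) (Hj1 _ _ Hy) in E.
      case: (ltngtP m m') => // Hmm; exfalso.
      * by apply: (Hvstrict _ _ Hmm); rewrite E; apply: leC_refl.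
      * by apply: (Hvstrict _ _ Hmm); rewrite E; apply: leC_refl.
    by rewrite Er Em.
  + move=> [m r] [m' s] Hx Hy; rewrite /g /Omega_join /=.
    have HvM : le (v m) (v (maxn m m')) /\ le (v m') (v (maxn m m')).
      by split; apply: Hvmono; [apply: leq_maxl|apply: leq_maxr].
    have Hjm : forall x y z w, le x z -> le y w -> le (join x y) (join z w).
      move=> x y z w Hxz Hyw; apply: join_min.
      * exact: ple_trans Hxz (join_l _ _).
      * exact: ple_trans Hyw (join_r _ _).
    apply: ple_anti.
    * apply: join_min.
      -- case: (leP r s) => _.
         ++ exact: ple_trans (join_l (aa s) (v m')) (join_r _ _).
         ++ exact: ple_trans (join_l (aa r) (v m)) (join_l _ _).
      -- case: (leqP m m') => Hmm.
         ++ exact: ple_trans (join_r (aa s) (v m')) (join_r _ _).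
         ++ exact: ple_trans (join_r (aa r) (v m)) (join_l _ _).
    * apply: join_min; apply: join_min.
      -- case: (ltgtP r s) => Hrs.
         ++ apply: ple_trans (HJ m r s Hx Hrs) _; apply: Hjm; [apply: ple_refl|exact: HvM.1].
         ++ exact: join_l.
         ++ subst; exact: join_l.
      -- exact: ple_trans HvM.1 (join_r _ _).
      -- case: (ltgtP r s) => Hrs.
         ++ exact: join_l.
         ++ apply: ple_trans (HJ m' s r Hy Hrs) _; apply: Hjm; [apply: ple_refl|exact: HvM.2].
         ++ subst; exact: join_l.
      -- exact: ple_trans HvM.2 (join_r _ _).
- (* chain case *)
  have Hmax : forall k, (k < n)%N -> constc C M k a b ->
      exists c, cut k (F q0) c /\ forall c', cut k (F q0) c' -> leC k c' c.
    move=> k Hk Hc; apply: NNPP => H; apply: Hall; by exists k.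
  have [z [Hz Hzmax]] : exists z, F q0 z /\ forall k, (k < n)%N -> ((k < n)%N ->
      constc C M k a b -> forall c', cut k (F q0) c' -> leC k c' (f z k)).
    apply: (ideal_fin (Q := fun k y => (k < n)%N ->
      constc C M k a b -> forall c', cut k (F q0) c' -> leC k c' (f y k))) (HFI q0) _ _.
      move=> k y y' Hyy' Hq Hk Hc c' Hc'; exact: (leC_trans Hk (Hq Hk Hc c' Hc') (coord_mono Hyy' Hk)).
    move=> k Hk; case: (classic (constc C M k a b)) => Hc; last first.
      by case: (HFI q0) => [[y Hy] _]; exists y; split => // _ Hc'.
    case: (Hmax k Hk Hc) => c [[y [Hy Hcy]] Hcm]; exists y; split => // _ _ c' Hc'.
    exact: (leC_trans Hk (Hcm c' Hc') Hcy).
  pose bb := fun r => join (aa r) z.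
  have Hbi : forall r, f (bb r) i = f (aa r) i.
    move=> r; apply: (lub_eq Hi); apply: (leC_not Hi); exact: Hbelow Hz Hi Hsi.
  have Hbmono : forall p q, p < q -> le (bb p) (bb q).
    move=> p q Hpq; apply: coord_le => k Hk; apply/(lub_le _ _ _ Hk); split.
    + case: (Href k Hk) => Hk'.
      * apply: (leC_trans Hk (Hainc' p q k Hpq Hk Hk')) _; exact: (lub_ge (aa q) z Hk).1.
      * apply: (leC_trans Hk (Hzmax k Hk Hk Hk' _ (Hcst p k Hk Hk'))) _.
        exact: (lub_ge (aa q) z Hk).2.
    + exact: (lub_ge (aa q) z Hk).2.
  apply: hS; exists bb; split => // p q; split.
  + rewrite le_eqVlt => /orP [/eqP ->|Hpq]; [exact: ple_refl|exact: Hbmono].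
  + move=> Hle; case: (leP p q) => // Hqp; exfalso.
    have E : bb p = bb q := ple_anti Hle (Hbmono _ _ Hqp).
    apply: (Hainc q p i Hqp Hi Hsi).
    rewrite -(Hbi p) -(Hbi q) E; exact: leC_refl.
Qed.

Lemma join_eq x y : le x y -> join x y = y.
Proof. move=> H; apply: ple_anti; [apply: join_min => //; apply: ple_refl|apply: join_r]. Qed.

Lemma fwd : order_scattered_on (is_ideal le) (@set_incl P) ->
  order_scattered le /\ ~ has_Omega_subsemilattice join.
Proof.
move=> HL; split.
- move=> [h [_ Hh]]; apply: HL.
  exists (fun q x => le x (h q)); split.
  + move=> q; split; first by exists (h q); apply: ple_refl.
    split; first by move=> x y Hxy Hy; exact: ple_trans Hxy Hy.
    by move=> x y Hx Hy; exists (h q); split; [apply: ple_refl|split].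
  + move=> p q; split.
    * move=> Hpq x Hx; exact: ple_trans Hx (proj1 (Hh p q) Hpq).
    * move=> Hi; apply/Hh; apply: Hi; apply: ple_refl.
- move=> [g [gi gj]]; apply: HL.
  have [u [t [Hut Hgap]]] := forth.
  have Htlt : forall p q, p < q -> t p < t q.
    move=> p q Hpq; apply: lt_trans (Hgap _ _ Hpq) _; by case: (Hut q).
  have Htmono : forall p q, p <= q -> t p <= t q.
    move=> p q; rewrite le_eqVlt => /orP [/eqP ->|H]; [exact: lexx|exact: ltW (Htlt _ _ H)].
  have Hom : forall q, exists m, Omega_elt (m, t q).
    move=> q; case: (Hut q) => h1 h2 h3 _ h5; apply: dy_omega => //.
    by apply: ltW; apply: lt_trans h2.
  exists (fun q x => exists m r, Omega_elt (m, r) /\ r <= t q /\ le x (g (m, r))); split.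
  + move=> q; split.
      case: (Hom q) => m Hm; exists (g (m, t q)), m, (t q); split => //; split => //.
      exact: ple_refl.
    split.
      move=> x y Hxy [m [r [H1 [H2 H3]]]]; exists m, r; split => //; split => //.
      exact: ple_trans Hxy H3.
    move=> x y [m [r [H1 [H2 H3]]]] [m' [r' [H1' [H2' H3']]]].
    exists (g (Omega_join (m, r) (m', r'))); split.
      exists (maxn m m'), (Num.max r r'); split; first exact: (omega_join H1 H1').
      split; first by rewrite ge_max H2 H2'.
      exact: ple_refl.
    rewrite gj //; split; [exact: ple_trans H3 (join_l _ _)|exact: ple_trans H3' (join_r _ _)].
  + move=> p q; split.
      move=> Hpq x [m [r [H1 [H2 H3]]]]; exists m, r; split => //; split => //.
      exact: le_trans H2 (Htmono _ _ Hpq).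
    move=> Hincl; case: (leP p q) => // Hqp; exfalso.
    have [m Hm] := Hom p.
    have : exists m' r, Omega_elt (m', r) /\ r <= t q /\ le (g (m, t p)) (g (m', r)).
      apply: Hincl; exists m, (t p); split => //; split; [exact: lexx|exact: ple_refl].
    move=> [m' [r [H1 [H2 H3]]]].
    have Hr : r < t p by apply: le_lt_trans H2 (Htlt _ _ Hqp).
    have E := join_eq H3.
    rewrite -gj // in E.
    have := gi _ _ (omega_join Hm H1) H1 E.
    move=> /(congr1 snd) /=; rewrite (max_idPl (ltW Hr)) => Er.
    by move: Hr; rewrite Er ltxx.
Qed.
End Basic.

Theorem theorem9p7 (P : Type) (le : P -> P -> Prop) (join : P -> P -> P)
  (bot : P) (n : nat)
  (HP : is_join_semilattice le join)
  (Hbot : forall x, le bot x)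
  (Hdim : join_dim le join n) :
  order_scattered_on (is_ideal le) (@set_incl P)
  <-> (order_scattered le /\ ~ has_Omega_subsemilattice join).
Proof.
case: Hdim => [[C [leC [f [Htot [Hinj Hlub]]]]] _].
split.
- exact: fwd HP.
- move=> [hS hO]; exact: (back HP Htot Hinj Hlub Hbot hS hO).
Qed.
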